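(* Let $\alpha\in(0,1)$ and $c>0$, and let $K_\alpha$ be a class of finite simple undirected graphs that is closed under taking subgraphs and such that every graph $H\in K_\alpha$ with $h$ vertices has a balanced separator of cardinality at most $c\,h^{\alpha}$. Then there is a constant $C$ depending only on $\alpha$ and $c$ such that for every $G\in K_\alpha$ with $n\ge 1$ vertices, every nested dissection order $\pi$ of $G$ and every vertex $v$, the search space $\mathrm{SS}(v)$ in $G_\pi^\wedge$ has at most $C\,n^{\alpha}$ vertices.
   Context: Let $G=(V,E)$ be a finite simple undirected graph with $n=|V|$ vertices. A vertex order is a bijection $\pi:\{1,\dots,n\}\to V$; the rank of $v$ is $\pi^{-1}(v)$. Contracting a vertex $v$ in a graph means deleting $v$ and its incident edges and adding an edge between every pair of former neighbors of $v$ that are not already adjacent. The core graph $G_{\pi,i}$ is obtained from $G$ by contracting $\pi(1),\dots,\pi(i-1)$ in this order. $G_\pi^*$ is the graph on $V$ whose edge set is the union of the edge sets of all $G_{\pi,i}$, $i=1,\dots,n$ (i.e. $G$ together with all edges inserted during the contractions). $G_\pi^\wedge$ is the directed graph obtained from $G_\pi^*$ by orienting every edge from its endpoint of lower rank to its endpoint of higher rank. The search space $\mathrm{SS}(v)$ is the subgraph of $G_\pi^\wedge$ induced by the set of vertices reachable from $v$ in $G_\pi^\wedge$ (including $v$). A balanced separator of a graph with vertex set $V$, $|V|=n$, is a set $S\subseteq V$ such that $V\setminus S$ can be partitioned into sets $A,B$ (possibly empty) with no edge between $A$ and $B$ and $|A|,|B|\le 2n/3$. A nested dissection order of $G$ is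 defined recursively: if $G$ is empty it is the empty order; otherwise choose a balanced separator $S$ of $G$ of minimum cardinality with corresponding parts $A,B$, give the vertices of $S$ the ranks $n-|S|+1,\dots,n$ in arbitrary order, give the vertices of $A$ the ranks $1,\dots,|A|$ according to a nested dissection order of $G[A]$, and the vertices of $B$ the ranks $|A|+1,\dots,|A|+|B|$ according to a nested dissection order of $G[B]$. *)

(* Defs.v *)
From Stdlib Require Import Reals.
From mathcomp Require Import all_boot.

Set Implicit Arguments.
Unset Strict Implicit.
Unset Printing Implicit Defensive.

Section Graphs.
Variable T : finType.

Definition simple_graph (e : rel T) : Prop :=
  (forall x y, e x y = e y x) /\ (forall x, e x x = false).

Definition contract (e : rel T) (v : T) : rel T :=
  fun x y => [&& x != v, y != v & (e x y || [&& x != y, e x v & e v y])].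

(* A vertex order pi : {1..n} -> V is represented by the sequence
   s = [:: pi 1; ...; pi n] with perm_eq s (enum T); the (0-based) rank of v
   is index v s. *)
Definition vertex_order (s : seq T) : Prop := perm_eq s (enum T).

(* core graph G_{pi,i+1}: contract pi(1),...,pi(i) in this order *)
Definition core (e : rel T) (s : seq T) (i : nat) : rel T :=
  foldl contract e (take i s).

Definition Gstar (e : rel T) (s : seq T) : rel T :=
  fun x y => [exists i : 'I_(size s).+1, core e s i x y].

Definition Ghat (e : rel T) (s : seq T) : rel T :=
  fun x y => Gstar e s x y && (index x s < index y s).

Definition search_space (e : rel T) (s : seq T) (v : T) : {set T} :=
  [set y | connect (Ghat e s) v y].

Definition balanced_sep_parts (e : rel T) (U S A B : {set T}) : Prop :=
  [/\ S \subset U, A :|: B = U :\: S, [disjoint A & B],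
      (forall x y, x \in A -> y \in B -> e x y = false) &
      (3 * #|A| <= 2 * #|U|) && (3 * #|B| <= 2 * #|U|)].

Definition balanced_sep (e : rel T) (U S : {set T}) : Prop :=
  exists A B, balanced_sep_parts e U S A B.

Inductive nested_dissection (e : rel T) : {set T} -> seq T -> Prop :=
| nd_empty : nested_dissection e set0 [::]
| nd_step (U S A B : {set T}) (sA sB sS : seq T) :
    U != set0 ->
    balanced_sep_parts e U S A B ->
    (forall S', balanced_sep e U S' -> #|S| <= #|S'|) ->
    nested_dissection e A sA ->
    nested_dissection e B sB ->
    perm_eq sS (enum S) ->
    nested_dissection e U (sA ++ sB ++ sS).

End Graphs.

Definition graph_class := forall T : finType, rel T -> Prop.

Definition class_of_simple_graphs (K : graph_class) : Prop :=
  forall (T : finType) (e : rel T), K T e -> simple_graph e.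

Definition is_subgraph (T' : finType) (e' : rel T') (T : finType) (e : rel T) :=
  exists f : T' -> T, injective f /\ (forall x y, e' x y -> e (f x) (f y)).

Definition subgraph_closed (K : graph_class) : Prop :=
  forall (T : finType) (e : rel T) (T' : finType) (e' : rel T'),
    K T e -> simple_graph e' -> is_subgraph e' e -> K T' e'.

(* Main.v *)
Require Import Defs.
From Stdlib Require Import Reals Lra Lia.
From mathcomp Require Import all_boot.

Section Core.
Variable T : finType.
Variable e : rel T.
Variable s : seq T.
Hypothesis esym : forall x y, e x y = e y x.
Hypothesis us : uniq s.

Lemma contract_sym (r : rel T) v : (forall x y, r x y = r y x) ->
  forall x y, contract r v x y = contract r v y x.
Proof.
move=> Hr x y; rewrite /contract Hr (Hr y v) (Hr v x) (eq_sym y x).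
by case: (x != v); case: (y != v); case: (r y x); case: (x != y); case: (r x v); case: (r v y).
Qed.

Lemma foldl_sym l (r : rel T) : (forall x y, r x y = r y x) ->
  forall x y, foldl (@contract T) r l x y = foldl (@contract T) r l y x.
Proof.
elim: l r => [|v l IH] r Hr //=; apply: IH; exact: contract_sym.
Qed.

Lemma core_sym i x y : core e s i x y = core e s i y x.
Proof. exact: foldl_sym. Qed.

Lemma foldl_notin l (r : rel T) (X : pred T) : (forall x y, r x y -> ~~ X x) ->
  forall x y, foldl (@contract T) r l x y -> x \notin l /\ ~~ X x.
Proof.
elim: l r X => [|v l IH] r X Hr x y /=; first by move=> /Hr.
move=> H.
have Hc : forall a b, @contract T r v a b -> ~~ ((a == v) || X a).
  move=> a b /and3P [av bv /orP [/Hr Ha|/and3P [_ /Hr Ha _]]]; by rewrite negb_or av.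
have := IH (@contract T r v) (fun z => (z == v) || X z) Hc x y H.
rewrite in_cons /= !negb_or; case=> H1 H23; case/andP: H23 => H2 H3; by rewrite H1 H2 H3.
Qed.

Lemma core_notin i x y : core e s i x y -> x \notin take i s.
Proof.
move=> H; have [] := @foldl_notin (take i s) e pred0 _ x y H; by [].
Qed.

Lemma notin_take_index i x : x \notin take i s -> minn i (size s) <= index x s.
Proof.
move=> H; rewrite -{2}(cat_take_drop i s) index_cat (negbTE H) size_take.
rewrite /minn; case: ifP => _; exact: leq_addr.
Qed.

Lemma core_rank i x y : i < size s -> core e s i x y -> i <= index x s.
Proof.
move=> Hi /core_notin /notin_take_index; rewrite /minn Hi; by [].
Qed.


Lemma core_step i x0 : i < size s -> core e s i.+1 = contract (core e s i) (nth x0 s i).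
Proof. move=> Hi; by rewrite /core (take_nth x0 Hi) foldl_rcons. Qed.

Lemma core_stop i : size s <= i -> core e s i.+1 = core e s i.
Proof. move=> Hi; rewrite /core !take_oversize //; exact: leqW. Qed.

Lemma closed_core (E : nat) (U : {set T}) :
  (forall x, x \in U -> index x s < E) ->
  (forall x y, e x y -> x \in U -> y \notin U -> E <= index y s) ->
  forall i x y, core e s i x y -> x \in U -> y \notin U -> E <= index y s.
Proof.
move=> HU He; elim=> [|i IH] x y; first by rewrite /core take0; exact: He.
case: (ltnP i (size s)) => Hi; last by rewrite core_stop //; exact: IH.
rewrite (@core_step i x Hi) /contract => /and3P [xv yv /orP [Hxy|/and3P [_ Hxv Hvy]]] xU yU.
  exact: IH Hxy xU yU.
case vU: (nth x s i \in U).
  exact: IH Hvy vU yU.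
have := IH _ _ Hxv xU (negbT vU).
rewrite index_uniq // => Ei.
have := core_rank _ _ _ Hi Hxv; have := HU _ xU.
move=> a b; have := leq_trans Ei b; rewrite leqNgt a; by [].
Qed.

Lemma connect_inv (r : rel T) (P : T -> Prop) x y :
  (forall a b, P a -> r a b -> P b) -> P x -> connect r x y -> P y.
Proof.
move=> Hs Px /connectP [p Hp ->]; elim: p x Px Hp => [|z p IH] x Px //=.
move=> /andP [Hxz Hp]; apply: IH Hp; exact: Hs Px Hxz.
Qed.

Lemma Ghat_core x y : Ghat e s x y -> exists i, core e s i x y /\ index x s < index y s.
Proof.
move=> /andP [/existsP [i Hi] H]; by exists i.
Qed.

End Core.

Section ND.
Variable T : finType.
Variable e : rel T.
Hypothesis esym : forall x y, e x y = e y x.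

Lemma parts_facts (U S A B : {set T}) : balanced_sep_parts e U S A B ->
  [/\ forall x, x \in A -> x \notin S /\ x \notin B,
      forall x, x \in B -> x \notin S /\ x \notin A,
      forall x, (x \in U) = [|| x \in A, x \in B | x \in S],
      forall x y, x \in A -> y \in B -> e x y = false &
      A \subset U /\ B \subset U].
Proof.
case=> HSU HAB Hdis He _.
have memU : forall x, (x \in U) = [|| x \in A, x \in B | x \in S].
  move=> x; have : (x \in A :|: B) = (x \in U :\: S) by rewrite HAB.
  rewrite in_setU in_setD.
  case xS: (x \in S); first by rewrite (subsetP HSU) ?orbT.
  by move=> H; rewrite orbF H.
have hA : forall x, x \in A -> x \notin S /\ x \notin B.
  move=> x xA; have : x \in A :|: B by rewrite in_setU xA.
  by rewrite HAB in_setD => /andP [-> _]; rewrite (disjointFr Hdis xA).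
have hB : forall x, x \in B -> x \notin S /\ x \notin A.
  move=> x xB; have : x \in A :|: B by rewrite in_setU xB orbT.
  by rewrite HAB in_setD => /andP [-> _]; rewrite (disjointFl Hdis xB).
split=> //; split; apply/subsetP=> x xA; by rewrite memU xA ?orbT.
Qed.

Lemma nd_perm U t : nested_dissection e U t -> uniq t /\ (forall x, (x \in t) = (x \in U)).
Proof.
elim=> [|{}U S A B sA sB sS _ Hp _ _ [uA mA] _ [uB mB] pS]; first by split=> // x; rewrite in_set0.
have [hA hB memU _ _] := parts_facts _ _ _ _ Hp.
have mS : forall x, (x \in sS) = (x \in S) by move=> x; rewrite (perm_mem pS) mem_enum.
split.
  rewrite cat_uniq uA cat_uniq uB (perm_uniq pS) enum_uniq /= andbT.
  apply/andP; split.
    apply/hasPn=> x; rewrite mem_cat mB mS => /orP [xB|xS]; rewrite /= mA.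
      exact: (hB x xB).2.
    by apply/negP => /hA [/negP H _]; apply: H.
  apply/hasPn=> x; rewrite mS => xS; rewrite /= mB.
  by apply/negP => /hB [/negP H _]; apply: H.
by move=> x; rewrite memU !mem_cat mA mB mS.
Qed.

Lemma nd_size U t : nested_dissection e U t -> size t = #|U|.
Proof.
move=> /nd_perm [u m]; rewrite -(card_uniqP u); exact: eq_card.
Qed.

Lemma seg (p t q : seq T) x : uniq (p ++ t ++ q) ->
  (x \in t) = (size p <= index x (p ++ t ++ q) < size p + size t).
Proof.
rewrite cat_uniq => /and3P [_ Hh _].
rewrite index_cat; case xp: (x \in p).
  have : x \notin t by apply/negP => xt; move/hasPn: Hh => /(_ x); rewrite mem_cat xt xp => /(_ isT).
  by move/negbTE => ->; rewrite leqNgt index_mem xp.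
rewrite index_cat; case xt: (x \in t).
  by rewrite leq_addr /= ltn_add2l index_mem.
by rewrite leq_addr /= ltnNge leq_add2l leq_addr.
Qed.

End ND.

Arguments parts_facts {T e U S A B}.
Arguments nd_perm {T e U t}.
Arguments nd_size {T e U t}.
Arguments seg {T p t q x}.

Section Main.
Variable T : finType.
Variable e : rel T.
Variable s : seq T.
Hypothesis esym : forall x y, e x y = e y x.
Hypothesis us : uniq s.
Variables (alpha c D : R).
Hypothesis Hstep : forall ra a sS u : nat, (0 < a)%N -> (3 * a <= 2 * u)%N ->
  Rle (INR ra) (Rmult D (Rpower (INR a) alpha)) -> Rle (INR sS) (Rmult c (Rpower (INR u) alpha)) ->
  Rle (INR (ra + sS)) (Rmult D (Rpower (INR u) alpha)).
Hypothesis HcD : forall sS u : nat,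
  Rle (INR sS) (Rmult c (Rpower (INR u) alpha)) -> Rle (INR sS) (Rmult D (Rpower (INR u) alpha)).
Hypothesis Hsep : forall U : {set T}, U != set0 -> exists S, balanced_sep e U S /\
  Rle (INR #|S|) (Rmult c (Rpower (INR #|U|) alpha)).

Lemma nd_bound U t : nested_dissection e U t -> forall p q, s = p ++ t ++ q ->
  (forall x y, e x y -> x \in U -> y \notin U -> size p + size t <= index y s) ->
  forall v, v \in U ->
  Rle (INR #|search_space e s v :&: U|) (Rmult D (Rpower (INR #|U|) alpha)).
Proof.
elim=> [|{}U S A B sA sB sS U0 Hp Hmin ndA IHA ndB IHB pS] p q Es HUp v vU;
  first by rewrite in_set0 in vU.
have [hA hB memU eAB [sAU sBU]] := parts_facts Hp.
have [mA _] := (nd_perm ndA); have [mB _] := (nd_perm ndB).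
have sizeA := nd_size ndA; have sizeB := nd_size ndB.
have sizeS : size sS = #|S| by rewrite (perm_size pS) cardE.
set endA := size p + size sA.
set endB := endA + size sB.
set endS := endB + size sS.
have mS : forall x, (x \in sS) = (x \in S) by move=> x; rewrite (perm_mem pS) mem_enum.
have Es2 : s = p ++ sA ++ sB ++ sS ++ q by rewrite Es -!catA.
have memA : forall x, (x \in A) = (size p <= index x s < endA).
  move=> x; rewrite -(proj2 (nd_perm ndA)) Es2; apply: seg; by rewrite -Es2.
have memB : forall x, (x \in B) = (endA <= index x s < endB).
  move=> x; rewrite -(proj2 (nd_perm ndB)) Es2 catA.
  rewrite (@seg _ (p ++ sA) sB (sS ++ q)); first by rewrite size_cat.
  by rewrite -catA -Es2.
have memS : forall x, (x \in S) = (endB <= index x s < endS).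
  move=> x; rewrite -mS Es2.
  have -> : p ++ sA ++ sB ++ sS ++ q = (p ++ sA ++ sB) ++ sS ++ q by rewrite -!catA.
  rewrite (@seg _ (p ++ sA ++ sB) sS q); first by rewrite !size_cat addnA.
  by rewrite -!catA -Es2.
have HUp' : forall x y, e x y -> x \in U -> y \notin U -> endS <= index y s.
  move=> x y H1 H2 H3; have := HUp x y H1 H2 H3; by rewrite !size_cat /endS /endB /endA !addnA.
have upA : forall x y, e x y -> x \in A -> y \notin A -> endA <= index y s.
  move=> x y Hxy xA yA; case yU: (y \in U).
    move: yU; rewrite memU (negbTE yA) /=; case/orP => [yB|yS].
      by rewrite eAB in Hxy.
    move: yS; rewrite memS => /andP [H _]; apply: leq_trans H; exact: leq_addr.
  have := HUp' x y Hxy (subsetP sAU _ xA) (negbT yU); apply: leq_trans.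
  by rewrite /endS /endB -addnA leq_addr.
have upB : forall x y, e x y -> x \in B -> y \notin B -> endB <= index y s.
  move=> x y Hxy xB yB; case yU: (y \in U).
    move: yU; rewrite memU (negbTE yB) /=; case/orP => [yA|yS].
      by rewrite esym eAB in Hxy.
    by move: yS; rewrite memS => /andP [H _].
  have := HUp' x y Hxy (subsetP sBU _ xB) (negbT yU); apply: leq_trans.
  exact: leq_addr.
have ltA : forall x, x \in A -> index x s < endA by move=> x; rewrite memA => /andP [].
have ltB : forall x, x \in B -> index x s < endB by move=> x; rewrite memB => /andP [].
have clA := @closed_core T e s us endA A ltA upA.
have clB := @closed_core T e s us endB B ltB upB.
set R := search_space e s v.
have mono : forall y, y \in R -> index v s <= index y s.
  move=> y; rewrite inE; apply: (@connect_inv T _ (fun y => index v s <= index y s)) => // a b Ha /Ghat_core [i [_ H]].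
  by apply: leq_trans Ha (ltnW H).
have [S' [HS' cS']] := Hsep U U0.
have cS : Rle (INR #|S|) (Rmult c (Rpower (INR #|U|) alpha)).
  apply: Rle_trans cS'; apply: le_INR; apply/leP; exact: Hmin.
have Hcard : forall (X : {set T}), R :&: U \subset X :|: S -> #|R :&: U| <= #|X| + #|S|.
  move=> X H; apply: leq_trans (subset_leq_card H) _; exact: (leq_card_setU _ _).1.
move: vU; rewrite memU => /or3P [vA|vB|vS].
-
  have H : R :&: U \subset (R :&: A) :|: S.
    apply/subsetP=> y; rewrite in_setI => /andP [yR yU].
    have Inv : y \notin B /\ (y \in A \/ endA <= index y s).
      move: yR; rewrite inE; apply: (@connect_inv T _ (fun y => y \notin B /\ (y \in A \/ endA <= index y s))); last first.
        by split; [exact: (hA v vA).2 | left].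
      move=> a b [aB Ha] /Ghat_core [i [Hab Hi]]; split.
        apply/negP => bB; rewrite core_sym // in Hab.
        have := clB _ _ _ Hab bB aB; move: bB; rewrite memB => /andP [_ h1] h2.
        by have := leq_trans h2 (ltnW Hi); rewrite leqNgt h1.
      case: Ha => [aA|Ha]; last by right; exact: leq_trans Ha (ltnW Hi).
      case bA: (b \in A); [by left | right; exact: clA _ _ _ Hab aA (negbT bA)].
    move: yU; rewrite memU; case/or3P => [yA|yB|yS].
    - by rewrite in_setU in_setI yR yA.
    - by rewrite yB in Inv; case: Inv.
    - by rewrite in_setU yS orbT.
  have := Hcard _ H; move/leP/le_INR => H1; apply: Rle_trans H1 _.
  apply: (@Hstep #|R :&: A| #|A| #|S| #|U|).
  + by apply/card_gt0P; exists v.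
  + by case: Hp => _ _ _ _ /andP [].
  + apply: (IHA p (sB ++ sS ++ q)) => //.
  + exact: cS.
-
  have H : R :&: U \subset (R :&: B) :|: S.
    apply/subsetP=> y; rewrite in_setI => /andP [yR yU].
    have my := mono y yR.
    move: yU; rewrite memU; case/or3P => [yA|yB|yS].
    - move: vB; rewrite memB => /andP [h _]; have := leq_trans h my.
      by rewrite leqNgt ltA.
    - by rewrite in_setU in_setI yR yB.
    - by rewrite in_setU yS orbT.
  have := Hcard _ H; move/leP/le_INR => H1; apply: Rle_trans H1 _.
  apply: (@Hstep #|R :&: B| #|B| #|S| #|U|).
  + by apply/card_gt0P; exists v.
  + by case: Hp => _ _ _ _ /andP [].
  + apply: (IHB (p ++ sA) (sS ++ q)) => //; first by rewrite Es2 -catA.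
    move=> x y Hxy xB yB; rewrite size_cat; exact: upB Hxy xB yB.
  + exact: cS.
- have H : R :&: U \subset set0 :|: S.
    apply/subsetP=> y; rewrite in_setI => /andP [yR yU].
    have my := mono y yR.
    have hv : endB <= index v s by move: vS; rewrite memS => /andP [].
    move: yU; rewrite memU; case/or3P => [yA|yB|yS].
    - have := leq_trans hv my; rewrite leqNgt; move/negP; case.
      apply: leq_trans (ltA y yA) _; exact: leq_addr.
    - have := leq_trans hv my; rewrite leqNgt; move/negP; case.
      exact: ltB.
    - by rewrite in_setU yS orbT.
  have := Hcard _ H; rewrite cards0 add0n; move/leP/le_INR => H1; apply: Rle_trans H1 _.
  exact: HcD.
Qed.

End Main.

Section RealPart.
Local Open Scope R_scope.

Lemma rp_pos x a : 0 < Rpower x a.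
Proof. unfold Rpower; apply exp_pos. Qed.

Lemma q_lt1 alpha : 0 < alpha -> Rpower (2/3) alpha < 1.
Proof.
move=> Ha.
have E : Rpower 1 alpha = 1 by rewrite /Rpower ln_1 Rmult_0_r exp_0.
have H := @Rlt_Rpower_l (2/3) 1 alpha Ha. rewrite E in H. apply: H. split; lra.
Qed.

Lemma real_step alpha c (ra a sS u : nat) : 0 < alpha -> alpha < 1 -> 0 < c ->
  (0 < a)%coq_nat -> (3 * a <= 2 * u)%coq_nat ->
  INR ra <= c / (1 - Rpower (2/3) alpha) * Rpower (INR a) alpha ->
  INR sS <= c * Rpower (INR u) alpha ->
  INR (ra + sS) <= c / (1 - Rpower (2/3) alpha) * Rpower (INR u) alpha.
Proof.
intros Ha Ha1 Hc Ha0 H3 Hra HsS.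
set q := Rpower (2/3) alpha.
assert (Hq1 : q < 1) by (apply q_lt1; exact Ha).
assert (Hq0 : 0 < q) by apply rp_pos.
set D := c / (1 - q).
assert (HD : D * (1 - q) = c) by (unfold D; field; lra).
assert (HD0 : 0 < D) by (unfold D; apply Rdiv_lt_0_compat; lra).
assert (HA0 : 0 < INR a) by (apply lt_0_INR; lia).
assert (Hau : INR a <= 2/3 * INR u).
{ apply le_INR in H3. rewrite !mult_INR in H3. simpl in H3. lra. }
assert (HU0 : 0 < INR u) by lra.
assert (Hp : Rpower (INR a) alpha <= q * Rpower (INR u) alpha).
{ rewrite /q Rpower_mult_distr; [apply: Rle_Rpower_l; [lra|split; lra] | lra | lra]. }
rewrite plus_INR.
assert (D * Rpower (INR a) alpha <= D * (q * Rpower (INR u) alpha)) by (apply Rmult_le_compat_l; lra).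
rewrite -HD in HsS.
change (INR ra <= D * Rpower (INR a) alpha) in Hra.
lra.
Qed.

Lemma real_cD alpha c (sS u : nat) : 0 < alpha -> alpha < 1 -> 0 < c ->
  INR sS <= c * Rpower (INR u) alpha ->
  INR sS <= c / (1 - Rpower (2/3) alpha) * Rpower (INR u) alpha.
Proof.
intros Ha Ha1 Hc H.
set q := Rpower (2/3) alpha.
assert (Hq1 : q < 1) by (apply q_lt1; exact Ha).
assert (Hq0 : 0 < q) by apply rp_pos.
assert (HP : 0 < Rpower (INR u) alpha) by apply rp_pos.
assert (c <= c / (1 - q)).
{ apply (Rmult_le_reg_r (1 - q)); [lra|]. unfold Rdiv. rewrite Rmult_assoc Rinv_l; [nra|lra]. }
apply Rle_trans with (1 := H). apply Rmult_le_compat_r; lra.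
Qed.

End RealPart.

Section Sub.
Variable T : finType.
Variable U : {set T}.
Local Notation ST := {x : T | x \in U}.

Lemma imset_out (X : {set ST}) x : x \notin U -> (x \in [set val y | y in X]) = false.
Proof.
move=> xU; apply/negP => /imsetP [y _ Ey]; move: xU; rewrite Ey (valP y); by [].
Qed.

Lemma val_mem (X : {set ST}) (y : ST) : (val y \in [set val z | z in X]) = (y \in X).
Proof. apply: mem_imset; exact: val_inj. Qed.

Lemma in_val x : x \in U -> exists y : ST, x = val y.
Proof. move=> xU; by exists (exist _ x xU). Qed.

Lemma sep_to_T (e : rel T) (S' A' B' : {set ST}) :
  balanced_sep_parts (fun a b : ST => e (val a) (val b)) [set: ST] S' A' B' ->
  balanced_sep_parts e U [set val y | y in S'] [set val y | y in A'] [set val y | y in B'].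
Proof.
case=> _ HAB Hdis He /andP [cA cB].
have cU : #|[set: ST]| = #|U|.
  rewrite cardsT card_sig; apply: eq_card => x; by rewrite inE.
split.
- by apply/subsetP => x /imsetP [y _ ->]; exact: (valP y).
- apply/setP => x; rewrite in_setU in_setD; case xU: (x \in U); last by rewrite !imset_out ?xU.
  have [y ->] := in_val _ xU.
  rewrite !val_mem; have : (y \in A' :|: B') = (y \in [set: ST] :\: S') by rewrite HAB.
  by rewrite in_setU in_setD in_setT andbT.
- rewrite -setI_eq0; apply/eqP/setP => x; rewrite in_set0 in_setI.
  case xU: (x \in U); last by rewrite !imset_out ?xU.
  have [y ->] := in_val _ xU; rewrite !val_mem.
  by case yA: (y \in A') => /=; rewrite ?(disjointFr Hdis yA).
- move=> x z.
  case xU: (x \in U); last by rewrite imset_out // xU.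
  case zU: (z \in U); last by rewrite (imset_out _ _ (negbT zU)) => _.
  have [y ->] := in_val _ xU; have [w ->] := in_val _ zU; rewrite !val_mem; exact: He.
- by rewrite !card_imset; try exact: val_inj; rewrite -cU cA cB.
Qed.

End Sub.

Lemma sep_transfer (K : graph_class) (alpha c : R) :
  class_of_simple_graphs K -> subgraph_closed K ->
  (forall (T : finType) (e : rel T), K T e ->
         exists S : {set T}, balanced_sep e [set: T] S /\
           Rle (INR #|S|) (Rmult c (Rpower (INR #|T|) alpha))) ->
  forall (T : finType) (e : rel T), K T e -> forall U : {set T},
  exists S : {set T}, balanced_sep e U S /\
           Rle (INR #|S|) (Rmult c (Rpower (INR #|U|) alpha)).
Proof.
move=> Hsimp Hsub Hsep T e KG U.
set e' := fun a b : {x : T | x \in U} => e (val a) (val b).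
have [esym eirr] := Hsimp _ _ KG.
have K' : K ({x : T | x \in U}) e'.
  apply: (Hsub T e) => //.
    by split=> [x y|x]; rewrite /e'; [exact: esym | exact: eirr].
  by exists val; split; [exact: val_inj | by []].
have [S' [[A' [B' HP]] Hc]] := Hsep _ _ K'.
exists [set val y | y in S']; split.
  exists [set val y | y in A'], [set val y | y in B']; exact: sep_to_T HP.
have cU : #|[set: {x : T | x \in U}]| = #|U|.
  rewrite cardsT card_sig; apply: eq_card => x; by rewrite inE.
rewrite card_imset; last exact: val_inj.
by rewrite -cU cardsT.
Qed.

Theorem mainTheorem1 (alpha c : R) :
  Rlt 0 alpha -> Rlt alpha 1 -> Rlt 0 c ->
  exists C : R,
    forall K : graph_class,
      class_of_simple_graphs K ->
      subgraph_closed K ->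
      (forall (T : finType) (e : rel T), K T e ->
         exists S : {set T}, balanced_sep e [set: T] S /\
           Rle (INR #|S|) (Rmult c (Rpower (INR #|T|) alpha))) ->
      forall (T : finType) (e : rel T), K T e -> 1 <= #|T| ->
      forall s : seq T, nested_dissection e [set: T] s ->
      forall v : T,
        Rle (INR #|search_space e s v|) (Rmult C (Rpower (INR #|T|) alpha)).
Proof.
move=> Ha Ha1 Hc; exists (Rdiv c (Rminus 1 (Rpower (Rdiv 2 3) alpha))).
move=> K Hsimp Hsub Hsep T e KG HT s Hnd v.
have [esym eirr] := Hsimp _ _ KG.
have [us ms] := nd_perm Hnd.
have Hst : forall ra a sS u : nat, (0 < a)%N -> (3 * a <= 2 * u)%N ->
  Rle (INR ra) (Rmult (Rdiv c (Rminus 1 (Rpower (Rdiv 2 3) alpha))) (Rpower (INR a) alpha)) ->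
  Rle (INR sS) (Rmult c (Rpower (INR u) alpha)) ->
  Rle (INR (ra + sS)) (Rmult (Rdiv c (Rminus 1 (Rpower (Rdiv 2 3) alpha))) (Rpower (INR u) alpha)).
  move=> ra a sS u /leP H1 /leP H2; exact: real_step.
have HcD : forall sS u : nat,
  Rle (INR sS) (Rmult c (Rpower (INR u) alpha)) ->
  Rle (INR sS) (Rmult (Rdiv c (Rminus 1 (Rpower (Rdiv 2 3) alpha))) (Rpower (INR u) alpha)).
  move=> sS u; exact: real_cD.
have Hs : forall U : {set T}, U != set0 -> exists S, balanced_sep e U S /\
  Rle (INR #|S|) (Rmult c (Rpower (INR #|U|) alpha)).
  move=> U _; exact: (@sep_transfer K alpha c Hsimp Hsub Hsep T e KG U).
have E1 : s = [::] ++ s ++ [::] by rewrite /= cats0.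
have E2 : forall x y, e x y -> x \in [set: T] -> y \notin [set: T] -> size ([::] : seq T) + size s <= index y s.
  move=> x y h1 h2; by rewrite in_setT.
have := @nd_bound T e s esym us alpha c _ Hst HcD Hs [set: T] s Hnd [::] [::] E1 E2 v (in_setT v).
by rewrite setIT cardsT.
Qed.
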